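(* For every $k$-tree $T$ and every $k$-clique $C$ of $T$, $R(T;C)>\overline N(T;C)$.
   Context: A $k$-tree is defined recursively: $K_k$ is a $k$-tree, and if $T$ is a $k$-tree then so is the graph obtained by joining a new vertex to all vertices of some $k$-clique of $T$; there are no others. A sub-$k$-tree is a subgraph that is itself a $k$-tree. $R(T;C)$ is the sum of the numbers of vertices of all sub-$k$-trees of $T$ containing $C$, and $\overline N(T;C)$ is the number of sub-$k$-trees of $T$ not containing $C$. *)

(* Defs.v *)
From mathcomp Require Import all_boot.
From mathcomp Require Import boolp.
Set Implicit Arguments. Unset Strict Implicit. Unset Printing Implicit Defensive.

Section KTree.
Variable V : finType.

(* A graph on the vertex type V is a pair (S, E) : vertex set S and a set E of
   edges, each edge being a 2-element subset of S. *)

Definition is_clique (E : {set {set V}}) (K : {set V}) : Prop :=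
  forall x y, x \in K -> y \in K -> x != y -> [set x; y] \in E.

Definition complete_edges (S : {set V}) : {set {set V}} :=
  [set e in powerset S | #|e| == 2].

Inductive is_ktree (k : nat) : {set V} -> {set {set V}} -> Prop :=
| ktree_base (S : {set V}) : #|S| = k -> is_ktree k S (complete_edges S)
| ktree_add (S : {set V}) (E : {set {set V}}) (K : {set V}) (v : V) :
    is_ktree k S E -> K \subset S -> #|K| = k -> is_clique E K -> v \notin S ->
    is_ktree k (v |: S) (E :|: [set [set v; w] | w in K]).

Definition subktrees (k : nat) (VT : {set V}) (ET : {set {set V}}) :
  {set {set V} * {set {set V}}} :=
  [set p : {set V} * {set {set V}} | [&& p.1 \subset VT, p.2 \subset ET & `[< is_ktree k p.1 p.2 >] ]].

Definition contains_clique (p : {set V} * {set {set V}}) (C : {set V}) : bool :=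
  (C \subset p.1) && (complete_edges C \subset p.2).

Definition Rsum (k : nat) (VT : {set V}) (ET : {set {set V}}) (C : {set V}) : nat :=
  \sum_(p in subktrees k VT ET | contains_clique p C) #|p.1|.

Definition Nbar (k : nat) (VT : {set V}) (ET : {set {set V}}) (C : {set V}) : nat :=
  #|[set p in subktrees k VT ET | ~~ contains_clique p C]|.

End KTree.

(* Main.v *)
Require Import Defs.
From mathcomp Require Import all_boot.
From mathcomp Require Import boolp zify.
Set Implicit Arguments. Unset Strict Implicit. Unset Printing Implicit Defensive.

Ltac nlia := repeat match goal with
  | H : is_true (leq _ _) |- _ => revert H
  | H : @eq nat _ _ |- _ => revert H
  end; repeat match goal with
  | |- context [ #|?A| ] => let x := fresh "c" in move: #|A| => x
  | |- context [ @bigop.body ?R ?I ?idx ?r ?f ] =>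
      let x := fresh "s" in move: (@bigop.body R I idx r f) => x
  end; lia.

Section Basic.
Variable V : finType.
Variable k : nat.
Implicit Types (S A B X K C VT : {set V}) (E ET : {set {set V}}) (v u : V).

Definition nbr E (v : V) : {set V} := [set x | (x != v) && ([set v; x] \in E)].
Definition del E (v : V) : {set {set V}} := [set e in E | v \notin e].
Definition star (v : V) K : {set {set V}} := [set [set v; w] | w in K].

Lemma complete_edgesP S (e : {set V}) : (e \in complete_edges S) = (e \subset S) && (#|e| == 2).
Proof. by rewrite /complete_edges inE powersetE. Qed.

Lemma edge2_with v (e : {set V}) : #|e| == 2 -> v \in e -> exists2 x, x != v & e = [set v; x].
Proof.
move=> /cards2P [x [y [xy ->]]]; rewrite !inE => /orP [] /eqP ->.
  by exists y; rewrite // eq_sym.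
by exists x; rewrite // setUC.
Qed.

Lemma set2_eq (u x w : V) : [set u; x] = [set u; w] -> x != u -> x = w.
Proof.
move=> e xu; have : x \in [set u; w] by rewrite -e !inE eqxx orbT.
by rewrite !inE (negbTE xu) => /eqP.
Qed.

Lemma in_star v K (e : {set V}) : (e \in star v K) = [exists w in K, e == [set v; w]].
Proof.
apply/imsetP/existsP => [[w wK ->]|[w /andP [wK /eqP ->]]]; first by exists w; rewrite wK eqxx.
by exists w.
Qed.

Lemma star_v v K (e : {set V}) : e \in star v K -> v \in e.
Proof. by case/imsetP => w _ ->; rewrite !inE eqxx. Qed.

Lemma ktree_edges S E : is_ktree k S E -> forall e, e \in E -> (e \subset S) && (#|e| == 2).
Proof.
elim=> [S0 _ | S0 E0 K v _ IH KS _ _ vS] e.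
  by rewrite complete_edgesP.
rewrite inE => /orP [/IH /andP [eS ->]|/imsetP [w wK ->]].
  by rewrite andbT (subset_trans eS) // subsetUr.
have wS : w \in S0 by apply: (subsetP KS).
rewrite cards2 (_ : v != w) ?andbT; last by apply/eqP => e'; rewrite e' wS in vS.
by apply/subsetP => x; rewrite !inE => /orP [] /eqP ->; rewrite ?eqxx // wS orbT.
Qed.

Lemma ktree_card S E : is_ktree k S E -> k <= #|S|.
Proof.
elim=> [S0 -> //| S0 E0 K v _ IH _ _ _ vS].
by rewrite cardsU1 vS add1n ltnW.
Qed.

Lemma ktree_k S E : is_ktree k S E -> #|S| = k -> E = complete_edges S.
Proof.
case=> [//| S0 E0 K v H0 _ _ _ vS].
rewrite cardsU1 vS add1n => e; have := ktree_card H0; by rewrite -e ltnn.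
Qed.

Lemma E_split S E v : is_ktree k S E -> E = del E v :|: star v (nbr E v).
Proof.
move=> H; apply/setP => e; rewrite !inE.
case: (boolP (v \in e)) => ve; rewrite ?ve /= ?andbF ?andbT.
  apply/idP/idP => [eE|/imsetP [w]]; last by rewrite inE => /andP [_ wE] ->.
  have /andP [_ c2] := ktree_edges H eE.
  have [x xv ex] := edge2_with c2 ve.
  by apply/imsetP; exists x; rewrite // inE xv -ex eE.
case: (boolP (e \in star v _)) => [/star_v|]; last by rewrite orbF.
by rewrite (negbTE ve).
Qed.

Lemma nbr_sub S E v : is_ktree k S E -> nbr E v \subset S :\ v.
Proof.
move=> H; apply/subsetP => x; rewrite !inE => /andP [xv /(ktree_edges H) /andP [/subsetP sS _]].
by rewrite xv sS // !inE eqxx orbT.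
Qed.

Lemma complete_add u S : u \notin S -> complete_edges S :|: star u S = complete_edges (u |: S).
Proof.
move=> uS; apply/setP => e; rewrite inE !complete_edgesP.
apply/idP/idP.
  case/orP => [/andP [eS ->]|/imsetP [w wS ->]].
    by rewrite (subset_trans eS) // subsetUr.
  rewrite cards2 (_ : u != w) ?andbT; last by apply/eqP => e'; rewrite e' wS in uS.
  by apply/subsetP => x; rewrite !inE => /orP [] /eqP ->; rewrite ?eqxx // wS orbT.
case/andP => eS c2; case: (boolP (u \in e)) => ue.
  have [x xu ex] := edge2_with c2 ue; apply/orP; right; apply/imsetP; exists x => //.
  have : x \in u |: S by apply: (subsetP eS); rewrite ex !inE eqxx orbT.
  by rewrite !inE (negbTE xu).
apply/orP; left; rewrite c2 andbT; apply/subsetP => x xe.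
have : x \in u |: S by apply: (subsetP eS).
by rewrite !inE => /orP [/eqP xu|//]; rewrite -xu xe in ue.
Qed.

Lemma del_complete X v : del (complete_edges X) v = complete_edges (X :\ v).
Proof.
apply/setP => e; rewrite !inE ?powersetE subsetD1.
by case: (e \subset X); case: (v \in e); case: (#|e| == 2).
Qed.

Lemma nbr_complete X v : v \in X -> nbr (complete_edges X) v = X :\ v.
Proof.
move=> vX; apply/setP => x; rewrite !inE ?powersetE cards2.
case: (boolP (x == v)) => //= xv; rewrite eq_sym in xv; rewrite xv /= andbT.
apply/subsetP/idP => [s|xX y]; first by apply: s; rewrite !inE eqxx orbT.
by rewrite !inE => /orP [] /eqP ->.
Qed.

Lemma clique_complete X A : A \subset X -> is_clique (complete_edges X) A.
Proof.
move=> AX x y xA yA xy; rewrite complete_edgesP cards2 xy andbT.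
by apply/subsetP => z; rewrite !inE => /orP [] /eqP ->; apply: (subsetP AX).
Qed.

Lemma clique_mono E1 E2 A : E1 \subset E2 -> is_clique E1 A -> is_clique E2 A.
Proof. by move=> s c x y xA yA xy; apply: (subsetP s); apply: c. Qed.


Lemma ktree_remove S E v : is_ktree k S E -> v \in S -> k < #|S| -> #|nbr E v| <= k ->
  [/\ is_ktree k (S :\ v) (del E v), #|nbr E v| = k & is_clique E (nbr E v)].
Proof.
move=> H; elim: H v => [S0 c0 | S1 E1 K1 u H1 IH KS cK clK uS] v.
  by move=> _; rewrite c0 ltnn.
rewrite inE => vS lt nb.
case: (eqVneq v u) => [->|vu].
  have dE : del (E1 :|: star u K1) u = E1.
    apply/setP => e; rewrite !inE; case eE: (e \in E1) => /=.
      have /andP [/subsetP eS _] := ktree_edges H1 eE.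
      have ue : u \notin e by apply/negP => /eS; rewrite (negbTE uS).
      by rewrite ue.
    by case: (boolP (e \in star u K1)) => // /star_v ->.
  have nK : nbr (E1 :|: star u K1) u = K1.
    apply/setP => x; rewrite !inE; apply/idP/idP.
      case/andP => xu /orP [/(ktree_edges H1) /andP [/subsetP s _]| /imsetP [w wK e]].
        by have := s u; rewrite !inE eqxx (negbTE uS) => /(_ isT).
      by rewrite (set2_eq e xu).
    move=> xK; have xu : x != u.
      by apply/eqP => e; rewrite -e (subsetP KS x xK) in uS.
    by rewrite xu /=; apply/orP; right; apply/imsetP; exists x.
  rewrite setU1K // dE nK; split => //.
  by apply: clique_mono clK; apply: subsetUl.
have v1 : v \in S1 by move: vS; rewrite !inE (negbTE vu).
have sub1 : nbr E1 v \subset nbr (E1 :|: star u K1) v.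
  by apply/subsetP => x; rewrite !inE => /andP [-> ->].
case: (ltnP k #|S1|) => [lt1|le1].
  have [H1' c1 cl1] := IH v v1 lt1 (leq_trans (subset_leq_card sub1) nb).
  have vK : v \notin K1.
    apply/negP => vK.
    have uN : u \in nbr (E1 :|: star u K1) v.
      rewrite !inE eq_sym vu /=; apply/orP; right; apply/imsetP; exists v => //.
      by rewrite setUC.
    have uN1 : u \notin nbr E1 v.
      by apply/negP => /(subsetP (nbr_sub v H1)); rewrite !inE (negbTE uS) andbF.
    have : #|u |: nbr E1 v| <= #|nbr (E1 :|: star u K1) v|.
      apply: subset_leq_card; apply/subsetP => x; rewrite in_setU1 => /orP [/eqP -> //|].
      by apply: (subsetP sub1).
    by rewrite cardsU1 uN1 c1 add1n => /leq_trans /(_ nb); rewrite ltnn.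
  have nE : nbr (E1 :|: star u K1) v = nbr E1 v.
    apply/eqP; rewrite eqEsubset sub1 andbT; apply/subsetP => x.
    rewrite !inE => /andP [xv /orP [->|/imsetP [w wK e]]]; first by rewrite xv.
    have : v \in [set u; w] by rewrite -e !inE eqxx.
    by rewrite !inE (negbTE vu) => /eqP vw; rewrite vw wK in vK.
  have dE : del (E1 :|: star u K1) v = del E1 v :|: star u K1.
    apply/setP => e; rewrite !inE; case: (boolP (e \in star u K1)) => eS; last by rewrite !orbF.
    rewrite !orbT /=; case/imsetP: eS => w wK ->.
    by rewrite !inE negb_or vu /=; apply/eqP => vw; rewrite vw wK in vK.
  have sE : (u |: S1) :\ v = u |: (S1 :\ v).
    apply/setP => x; rewrite !inE; case: (eqVneq x v) => [->|] //=; first by rewrite (negbTE vu).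
  rewrite sE dE nE; split => //; last by apply: clique_mono cl1; apply: subsetUl.
  apply: ktree_add => //.
  - by rewrite subsetD1 KS vK.
  - move=> x y xK yK xy; rewrite inE clK //= !inE negb_or.
    by apply/andP; split; apply/eqP => e; rewrite e ?xK ?yK in vK.
  - by rewrite !inE (negbTE uS) andbF.
have c1 : #|S1| = k by apply/eqP; rewrite eqn_leq le1 (ktree_card H1).
have e1 := ktree_k H1 c1.
have KS1 : K1 = S1 by apply/eqP; rewrite eqEcard KS cK c1 leqnn.
have vU : v \in u |: S1 by rewrite !inE v1 orbT.
rewrite e1 KS1 complete_add // del_complete nbr_complete //.
have cD : #|(u |: S1) :\ v| = k.
  have := cardsD1 v (u |: S1); rewrite vU cardsU1 uS c1 add1n add1n.
  by move=> [].
split => //; first by apply: ktree_base.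
by apply: clique_complete; apply: subD1set.
Qed.


Definition pairT := ({set V} * {set {set V}})%type.
Definition le2 (p q : pairT) := (p.1 \subset q.1) && (p.2 \subset q.2).
Definition cpair K : pairT := (K, complete_edges K).
Definition upc (U F : {set pairT}) :=
  F \subset U /\ forall p q, p \in F -> q \in U -> le2 p q -> q \in F.
Definition kcl VT ET K := [/\ K \subset VT, #|K| = k & is_clique ET K].
Definition up (U : {set pairT}) K := [set p in U | contains_clique p K].
Definition wC C (p : pairT) := if contains_clique p C then #|p.1| else 0.
Definition goodb VT ET C (F : {set pairT}) b :=
  b = 0 \/ (b = k.-1 /\ (cpair C \in F \/
     exists K, kcl VT ET K /\ F = up (subktrees k VT ET) K)).
Definition INV VT ET := forall C (F : {set pairT}) b, kcl VT ET C ->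
  upc (subktrees k VT ET) F -> goodb VT ET C F b ->
  #|F| + b <= \sum_(p in F) wC C p.

Lemma subkP (p : pairT) VT ET :
  reflect [/\ p.1 \subset VT, p.2 \subset ET & is_ktree k p.1 p.2]
          (p \in subktrees k VT ET).
Proof.
rewrite inE; apply: (iffP idP).
  by case/and3P => a b /asboolP c.
by case=> a b c; rewrite a b; apply/asboolP.
Qed.

Lemma complete_sub ET K : is_clique ET K -> complete_edges K \subset ET.
Proof.
move=> cl; apply/subsetP => e; rewrite complete_edgesP => /andP [eK /cards2P [x [y [xy exy]]]].
move: eK; rewrite exy => eK; apply: cl => //; apply: (subsetP eK); rewrite !inE eqxx ?orbT //.
Qed.

Lemma cpair_sub VT ET K : kcl VT ET K -> cpair K \in subktrees k VT ET.
Proof.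
case=> KV cK cl; apply/subkP; split => //; first exact: complete_sub.
exact: ktree_base.
Qed.

Lemma contains_le (p : pairT) K : contains_clique p K = le2 (cpair K) p.
Proof. by []. Qed.

Lemma le2_trans (p q r : pairT) : le2 p q -> le2 q r -> le2 p r.
Proof.
by case/andP => a b /andP [c d]; rewrite /le2 (subset_trans a c) (subset_trans b d).
Qed.

Lemma top_in VT ET : is_ktree k VT ET -> (VT, ET) \in subktrees k VT ET.
Proof. by move=> H; apply/subkP; split. Qed.

Lemma kcl_top VT ET K : kcl VT ET K -> contains_clique (VT, ET) K.
Proof. by case=> KV _ cl; rewrite /contains_clique /= KV complete_sub. Qed.

Lemma uniq_k (p : pairT) VT ET K : p \in subktrees k VT ET -> #|p.1| = k ->
  contains_clique p K -> #|K| = k -> p = cpair K.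
Proof.
case: p => S E /subkP [/= _ _ H] cS /andP [/= KS _] cK.
have eK : K = S by apply/eqP; rewrite eqEcard KS cK cS leqnn.
by rewrite /cpair eK (ktree_k H cS).
Qed.

Lemma INV_base S : 0 < k -> #|S| = k -> INV S (complete_edges S).
Proof.
move=> k0 cS C F b HC [FU upF] gb.
have US : forall p, p \in subktrees k S (complete_edges S) -> p = cpair S.
  case=> S' E' /subkP [/= s1 _ H].
  have eS : S' = S.
    by apply/eqP; rewrite eqEcard s1 cS (ktree_card H).
  by rewrite /cpair -eS (ktree_k H) // eS.
have eC : C = S by case: HC => CS cC _; apply/eqP; rewrite eqEcard CS cS cC leqnn.
have bk : b <= k.-1 by case: gb => [->|[->]].
case: (boolP (cpair S \in F)) => inF.
  have -> : F = [set cpair S].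
    apply/eqP; rewrite eqEsubset sub1set inF andbT; apply/subsetP => p pF.
    by rewrite inE (US p (subsetP FU p pF)).
  rewrite big_set1 cards1 /wC eC /contains_clique /= !subxx /=.
  by rewrite cS add1n; case: k k0 bk.
have F0 : F = set0.
  apply/setP => p; rewrite inE; apply/negP => pF.
  by move: inF; rewrite -(US p (subsetP FU p pF)) pF.
case: gb => [->|[_ [|[K [HK eF]]]]]; first by rewrite F0 cards0.
  by rewrite eC (negbTE inF).
have : (S, complete_edges S) \in F.
  rewrite eF inE kcl_top // top_in //; exact: ktree_base.
by rewrite F0 inE.
Qed.


Lemma clique_of_complete E A : complete_edges A \subset E -> is_clique E A.
Proof.
move=> s x y xA yA xy; apply: (subsetP s); rewrite complete_edgesP cards2 xy andbT.
by apply/subsetP => z; rewrite !inE => /orP [] /eqP ->.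
Qed.

Implicit Types (F : {set pairT}).


Section Step.
Variables (S0 : {set V}) (E0 : {set {set V}}) (K : {set V}) (v : V).
Hypotheses (H0 : is_ktree k S0 E0) (KS : K \subset S0) (cK : #|K| = k)
  (clK : is_clique E0 K) (vS : v \notin S0) (k0 : 0 < k).

Notation VT := (v |: S0).
Notation ET := (E0 :|: star v K).
Notation U := (subktrees k VT ET).
Notation U0 := (subktrees k S0 E0).
Definition ext (q : pairT) : pairT := (v |: q.1, q.2 :|: star v K).

Lemma vK : v \notin K.
Proof. by apply/negP => /(subsetP KS); rewrite (negbTE vS). Qed.

Lemma notin2K x y : x \in K -> y \in K -> v \notin [set x; y].
Proof.
move=> xK yK; have := vK; rewrite !inE negb_or.
by case: (eqVneq v x) => [e|]; case: (eqVneq v y) => [e'|] //=; rewrite ?e ?e' ?xK ?yK.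
Qed.

Lemma E0v e : e \in E0 -> v \notin e.
Proof.
by move/(ktree_edges H0) => /andP [/subsetP s _]; apply/negP => /s; rewrite (negbTE vS).
Qed.

Lemma U0U p : p \in U0 -> p \in U.
Proof.
case/subkP => a b c; apply/subkP; split => //.
  by apply: subset_trans a _; apply: subsetUr.
by apply: subset_trans b _; apply: subsetUl.
Qed.

Lemma U0v p : p \in U0 -> v \notin p.1.
Proof. by case/subkP => a _ _; apply/negP => /(subsetP a); rewrite (negbTE vS). Qed.

Lemma U0e p e : p \in U0 -> e \in p.2 -> v \notin e.
Proof. by case/subkP => _ b _ /(subsetP b); apply: E0v. Qed.

Lemma Ua p : p \in U -> v \notin p.1 -> p \in U0.
Proof.
case/subkP => a b H vp; apply/subkP; split => //.
  apply/subsetP => x xp; have := subsetP a x xp; rewrite !inE => /orP [/eqP e|//].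
  by rewrite -e xp in vp.
apply/subsetP => e ep; have := subsetP b e ep; rewrite inE => /orP [//|/star_v ve].
have /andP [/subsetP s _] := ktree_edges H ep.
by rewrite (s v ve) in vp.
Qed.

Lemma nbrK p : p \in U -> nbr p.2 v \subset K.
Proof.
case/subkP => _ b _; apply/subsetP => x; rewrite inE => /andP [xv /(subsetP b)].
rewrite inE => /orP [/E0v|/imsetP [w wK e]]; first by rewrite !inE eqxx.
by rewrite (set2_eq e xv).
Qed.

Lemma Ue p : p \in U -> v \in p.1 -> k < #|p.1| ->
  exists2 q, q \in U0 & contains_clique q K && (p == ext q).
Proof.
move=> pU vp lt; have nK := nbrK pU.
case/subkP: (pU) => a b H.
have [H' cn cl] := ktree_remove H vp lt (leq_trans (subset_leq_card nK) (eq_leq cK)).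
have eN : nbr p.2 v = K by apply/eqP; rewrite eqEcard nK cn cK leqnn.
exists (p.1 :\ v, del p.2 v).
  apply/subkP; split => //=.
    apply/subsetP => x; rewrite !inE => /andP [xv xp].
    by have := subsetP a x xp; rewrite !inE (negbTE xv).
  apply/subsetP => e; rewrite inE => /andP [ep ve].
  have := subsetP b e ep; rewrite inE => /orP [//|/star_v]; by rewrite (negbTE ve).
apply/andP; split.
  rewrite /contains_clique /= -{1}eN (nbr_sub v H) /=.
  apply/subsetP => e; rewrite complete_edgesP => /andP [eK /cards2P [x [y [xy exy]]]].
  have xK : x \in K by apply: (subsetP eK); rewrite exy !inE eqxx.
  have yK : y \in K by apply: (subsetP eK); rewrite exy !inE eqxx orbT.
  rewrite inE exy; rewrite -eN in xK yK; rewrite (cl x y xK yK xy) /=.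
  by rewrite eN in xK yK; apply: notin2K.
apply/eqP; case: p pU a b H vp lt nK H' cn cl eN => S E pU a b H vp lt nK H' cn cl eN /=.
have HS := E_split v H; rewrite /= in HS eN.
by rewrite /ext /= setD1K //; congr (_, _); rewrite {1}HS eN.
Qed.


Lemma ext_in q : q \in U0 -> contains_clique q K -> ext q \in U.
Proof.
case/subkP => a b H /andP [Kq cq]; apply/subkP; split => /=.
- by apply/subsetP => x; rewrite !inE => /orP [->//|/(subsetP a) ->]; rewrite orbT.
- exact: setSU.
- apply: ktree_add => //; first exact: clique_of_complete.
  by apply/negP => /(subsetP a); rewrite (negbTE vS).
Qed.

Lemma del_ext q : q \in U0 -> del (q.2 :|: star v K) v = q.2.
Proof.
move=> qU; apply/setP => e; rewrite !inE.
case eq: (e \in q.2) => /=; first by rewrite (U0e qU eq).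
by case: (boolP (e \in star v K)) => // /star_v ->.
Qed.

Lemma ext_inj : {in U0 &, injective ext}.
Proof.
move=> [a b] [c d] u1 u2 [e1 e2].
have eb : b = d.
  by have := del_ext u1; have := del_ext u2; rewrite /= -e2 => -> ->.
have ea : a = c.
  have := setU1K (U0v u1); have := setU1K (U0v u2); rewrite /= -e1 => -> ->.
  by [].
by rewrite ea eb.
Qed.

Lemma le_ext q q' : le2 q q' -> le2 (ext q) (ext q').
Proof.
case/andP => a b; rewrite /le2 /= setSU // andbT.
by apply/subsetP => x; rewrite !inE => /orP [->//|/(subsetP a) ->]; rewrite orbT.
Qed.

Lemma le_ext1 q : le2 q (ext q).
Proof. by rewrite /le2 /= subsetUl subsetUr. Qed.

Lemma card_ext q : q \in U0 -> #|(ext q).1| = #|q.1|.+1.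
Proof. by move=> qU; rewrite /= cardsU1 U0v. Qed.

Lemma Uq p : p \in U -> v \in p.1 -> #|p.1| = k -> p = cpair p.1 /\ p.1 \subset v |: K.
Proof.
move=> pU vp cp; have nK := nbrK pU; case/subkP: pU => _ _ H.
split; first by case: p H vp cp nK => S E /= H vp cp nK; rewrite /cpair /= (ktree_k H cp).
apply/subsetP => x xp; rewrite !inE; case: (eqVneq x v) => //= xv.
apply: (subsetP nK); rewrite inE; apply/andP; split => //.
have vx : v != x by rewrite eq_sym.
rewrite (ktree_k H cp) complete_edgesP cards2 vx andbT.
by apply/subsetP => z; rewrite !inE => /orP [] /eqP ->.
Qed.

Lemma cpair_le_ext S q : S \subset v |: K -> contains_clique q K -> le2 (cpair S) (ext q).
Proof.
move=> SK /andP [Kq cq]; apply/andP; split => /=.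
  apply/subsetP => x /(subsetP SK); rewrite !inE => /orP [->//|/(subsetP Kq) ->].
  by rewrite orbT.
apply/subsetP => e; rewrite complete_edgesP => /andP [eS c2]; rewrite inE.
case: (boolP (v \in e)) => ve.
  have [x xv ex] := edge2_with c2 ve; apply/orP; right; apply/imsetP; exists x => //.
  have : x \in S by apply: (subsetP eS); rewrite ex !inE eqxx orbT.
  by move/(subsetP SK); rewrite !inE (negbTE xv).
apply/orP; left; apply: (subsetP cq); rewrite complete_edgesP c2 andbT.
apply/subsetP => x xe; have := subsetP SK x (subsetP eS x xe); rewrite !inE => /orP [/eqP xv|//].
by rewrite -xv xe in ve.
Qed.

Lemma cont_ext_nv C q : v \notin C -> contains_clique (ext q) C = contains_clique q C.
Proof.
move=> vC; apply/idP/idP; last by rewrite !contains_le => h; apply: le2_trans h (le_ext1 q).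
case/andP => /= a b; apply/andP; split.
  apply/subsetP => x xC; have := subsetP a x xC; rewrite !inE => /orP [/eqP e|//].
  by rewrite -e xC in vC.
apply/subsetP => e eC; have := subsetP b e eC; rewrite inE => /orP [//|/star_v ve].
move: eC; rewrite complete_edgesP => /andP [/subsetP s _].
by rewrite (s v ve) in vC.
Qed.

Lemma C_sub C : kcl VT ET C -> v \in C -> C \subset v |: K.
Proof.
case=> CV _ cl vC; apply/subsetP => x xC; rewrite !inE.
case: (eqVneq x v) => //= xv.
have := cl v x vC xC; rewrite eq_sym xv => /(_ isT); rewrite inE => /orP [/E0v|/imsetP [w wK e]].
  by rewrite !inE eqxx.
by rewrite (set2_eq e xv).
Qed.


Lemma Uq_card : #|[set p in U | (v \in p.1) && (#|p.1| == k)]| <= k.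
Proof.
set Q := [set p in U | _].
have inj : {in Q &, injective (fun p : pairT => p.1 :\ v)}.
  move=> p1 p2 /setIdP [u1 /andP [v1 /eqP c1]] /setIdP [u2 /andP [v2 /eqP c2]] e.
  have [e1 _] := Uq u1 v1 c1; have [e2 _] := Uq u2 v2 c2.
  have e3 : p1.1 = p2.1 by rewrite -(setD1K v1) e setD1K.
  by rewrite e1 e2 e3.
rewrite -(card_in_imset inj).
apply: (@leq_trans #|[set A : {set V} | A \subset K & #|A| == k.-1]|).
  apply: subset_leq_card.
  apply/subsetP => A /imsetP [p /setIdP [pU /andP [vp /eqP cp]] ->]; rewrite inE.
  have [_ s] := Uq pU vp cp; apply/andP; split.
    apply/subsetP => x; rewrite !inE => /andP [xv xp]; have := subsetP s x xp.
    by rewrite !inE (negbTE xv).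
  by have := cardsD1 v p.1; rewrite vp cp add1n => ->.
by rewrite cards_draws cK; case: k k0 => // n _; rewrite /= binSn.
Qed.

Lemma kcl0 C : kcl VT ET C -> v \notin C -> kcl S0 E0 C.
Proof.
case=> CV cC cl vC; split => //.
  apply/subsetP => x xC; have := subsetP CV x xC; rewrite !inE => /orP [/eqP e|//].
  by rewrite -e xC in vC.
move=> x y xC yC xy; have := cl x y xC yC xy; rewrite inE => /orP [//|/star_v].
by rewrite !inE => /orP [] /eqP e; [rewrite e xC in vC | rewrite e yC in vC].
Qed.

Lemma kclK : kcl S0 E0 K.
Proof. by split. Qed.

Definition FA (F : {set pairT}) := [set p in F | v \notin p.1].
Definition FQ (F : {set pairT}) := [set p in F | (v \in p.1) && (#|p.1| == k)].
Definition FG (F : {set pairT}) := [set q in U0 | contains_clique q K && (ext q \in F)].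

Lemma sum_split (F : {set pairT}) (g : pairT -> nat) : F \subset U ->
  \sum_(p in F) g p = \sum_(p in FA F) g p + \sum_(p in FQ F) g p + \sum_(q in FG F) g (ext q).
Proof.
move=> FU; rewrite (bigID (fun p : pairT => v \notin p.1)) /= -addnA; congr (_ + _).
  by apply: eq_bigl => p; rewrite inE.
rewrite (bigID (fun p : pairT => #|p.1| == k)) /=; congr (_ + _).
  by apply: eq_bigl => p; rewrite !inE negbK andbA.
have inj : {in FG F &, injective ext}.
  by move=> q1 q2 /setIdP [u1 _] /setIdP [u2 _]; apply: ext_inj.
rewrite -(big_imset _ inj); apply: eq_bigl => p; apply/idP/idP.
  case/andP => /andP [pF]; rewrite negbK => vp nk.
  have pU := subsetP FU p pF; case/subkP: (pU) => _ _ H.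
  have lt : k < #|p.1| by rewrite ltn_neqAle eq_sym nk (ktree_card H).
  have [q qU /andP [cq /eqP e]] := Ue pU vp lt.
  by apply/imsetP; exists q => //; apply/setIdP; rewrite cq -e pF.
case/imsetP => q /setIdP [qU /andP [cq qF]] ->.
rewrite qF /= !inE eqxx /= card_ext //.
case/subkP: qU => _ _ H; have := ktree_card H => kq.
by rewrite eqn_leq negb_and -leqNgt kq.
Qed.

Lemma upcU (W A B : {set pairT}) : upc W A -> upc W B -> upc W (A :|: B).
Proof.
case=> AW uA [BW uB]; split; first by rewrite subUset AW BW.
move=> p q; rewrite !inE => /orP [pA|pB] qW le.
  by rewrite (uA p q pA qW le).
by rewrite (uB p q pB qW le) orbT.
Qed.

Lemma upc_FA F : upc U F -> upc U0 (FA F).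
Proof.
case=> FU uF; split.
  apply/subsetP => p /setIdP [pF vp]; exact: Ua (subsetP FU p pF) vp.
move=> p q /setIdP [pF _] qU le; apply/setIdP; split; first exact: uF p q pF (U0U qU) le.
exact: U0v.
Qed.

Lemma upc_FG F : upc U F -> upc U0 (FG F).
Proof.
case=> FU uF; split; first by apply/subsetP => q /setIdP [].
move=> q q' /setIdP [qU /andP [cq qF]] qU' le.
have cq' : contains_clique q' K by rewrite contains_le in cq *; apply: le2_trans cq le.
by apply/setIdP; rewrite cq' (uF _ _ qF (ext_in qU' cq') (le_ext le)).
Qed.

Lemma FG_full F : upc U F -> (exists p, p \in FQ F) -> FG F = up U0 K.
Proof.
case=> FU uF [p] /setIdP [pF /andP [vp /eqP cp]].
have pU := subsetP FU p pF; have [ep s] := Uq pU vp cp.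
apply/setP => q; rewrite [in LHS]inE [in RHS]inE; case qU: (q \in U0) => //=.
case cq: (contains_clique q K) => //=.
apply: (uF p) => //; first exact: ext_in.
by rewrite ep; apply: cpair_le_ext.
Qed.

Lemma FQ_card F : F \subset U -> #|FQ F| <= k.
Proof.
move=> FU; apply: leq_trans Uq_card; apply: subset_leq_card; apply/subsetP => p.
by move=> /setIdP [/(subsetP FU) pU h]; apply/setIdP.
Qed.

Lemma FA_up F K1 : F = up U K1 -> FA F = up U0 K1.
Proof.
move=> ->; apply/setP => p; apply/idP/idP.
  by case/setIdP => /setIdP [pU cp] vp; apply/setIdP; rewrite (Ua pU vp).
by case/setIdP => pU cp; apply/setIdP; rewrite U0v //; split=> //; apply/setIdP; rewrite U0U.
Qed.

Lemma FQ_up F K1 : kcl VT ET K1 -> F = up U K1 -> FQ F \subset [set cpair K1].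
Proof.
move=> [_ cK1 _] ->; apply/subsetP => p /setIdP [/setIdP [pU cp] /andP [_ /eqP c]].
by rewrite inE (uniq_k pU c cp cK1).
Qed.

Lemma FQ_upv F K1 : kcl VT ET K1 -> F = up U K1 -> v \in K1 -> cpair K1 \in FQ F.
Proof.
move=> h -> vK1; case: (h) => _ cK1 _; apply/setIdP; split; last by rewrite /= vK1 cK1 eqxx.
by apply/setIdP; rewrite cpair_sub // /contains_clique /= !subxx.
Qed.

Lemma FQ_upnv F K1 : kcl VT ET K1 -> F = up U K1 -> v \notin K1 -> FQ F = set0.
Proof.
move=> h eF vK1; apply/setP => p; rewrite [in RHS]inE; apply/negP => pQ.
have := subsetP (FQ_up h eF) p pQ; rewrite inE => /eqP ep.
by move: pQ; rewrite ep => /setIdP [_ /andP [/= vK2 _]]; rewrite vK2 in vK1.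
Qed.


Lemma INV_step : INV S0 E0 -> INV VT ET.
Proof.
move=> IH C F b HC [FU uF] gb.
have hF : upc U F by split.
have kb : b <= k.-1 by case: gb => [->|[->]].
have e1 : #|F| = #|FA F| + #|FQ F| + #|FG F|.
  by rewrite -sum1_card (sum_split (fun _ => 1) FU) !sum1_card.
rewrite e1 (sum_split _ FU).
set A := FA F; set Q := FQ F; set Gs := FG F.
have eA : A = FA F := erefl; have eQ : Q = FQ F := erefl; have eGs : Gs = FG F := erefl.
clearbody A Q Gs.
have cQ : #|Q| <= k by rewrite eQ; exact: FQ_card FU.
have uA : upc U0 A by rewrite eA; exact: upc_FA hF.
have uG : upc U0 Gs by rewrite eGs; exact: upc_FG hF.
have GK : (exists p, p \in Q) -> Gs = up U0 K by rewrite eQ eGs; exact: FG_full.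
have KG : (exists p, p \in Q) -> cpair K \in Gs.
  move=> h; rewrite (GK h); apply/setIdP; rewrite cpair_sub; last exact: kclK.
  by split => //; rewrite /contains_clique /= !subxx.
have TG : (exists p, p \in Q) -> (S0, E0) \in Gs.
  by move=> h; rewrite (GK h); apply/setIdP; rewrite top_in //; split => //; apply: kcl_top; exact: kclK.
case: (boolP (v \in C)) => vC.
  have CK := C_sub HC vC.
  have eG : \sum_(q in Gs) wC C (ext q) = \sum_(q in Gs) #|q.1| + #|Gs|.
    rewrite -sum1_card -big_split; apply: eq_bigr => q; rewrite eGs => /setIdP [qU /andP [cq _]].
    by rewrite /wC contains_le (cpair_le_ext CK cq) card_ext //= addn1.
  rewrite eG.
  set H := A :|: Gs.
  have eHH : H = A :|: Gs := erefl; clearbody H.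
  have uH : upc U0 H by rewrite eHH; exact: upcU uA uG.
  have eH : \sum_(q in H) wC K q = \sum_(q in Gs) #|q.1|.
    rewrite /wC -big_mkcondr; apply: eq_bigl => q; rewrite eHH; apply/idP/idP.
      case/andP; rewrite inE => /orP [qA|//] cq.
      have qU : q \in U0 by apply: (subsetP uA.1).
      rewrite eGs; apply/setIdP; split => //; rewrite cq /=.
      by apply: (uF q); [move: qA; rewrite eA => /setIdP [] | exact: ext_in | exact: le_ext1].
    by move=> qG; rewrite inE qG orbT /=; move: qG; rewrite eGs => /setIdP [_ /andP []].
  have cH : #|A| <= #|H| by rewrite eHH; apply: subset_leq_card; apply: subsetUl.
  have IHH : forall bH, goodb S0 E0 K H bH -> #|H| + bH <= \sum_(q in Gs) #|q.1|.
    by move=> bH g; rewrite -eH; apply: IH => //; exact: kclK.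
  have KH : (exists p, p \in Q) -> goodb S0 E0 K H k.-1.
    by move=> h; right; split => //; left; rewrite eHH inE (KG h) orbT.
  have cCk : #|C| = k by case: HC.
  have SQ : cpair C \in F -> k <= \sum_(p in Q) wC C p.
    move=> cF; have cQ' : cpair C \in Q by rewrite eQ; apply/setIdP; rewrite cF /= vC cCk eqxx.
    rewrite (bigD1 (cpair C)) //= /wC /contains_clique /= !subxx /= cCk.
    exact: leq_addr.
  case cF: (cpair C \in F).
    have ex : exists p, p \in Q.
      by exists (cpair C); rewrite eQ; apply/setIdP; rewrite cF /= vC cCk eqxx.
    have := IHH _ (KH ex); have := SQ cF; nlia.
  case: (set_0Vmem Q) => [Q0 | [p pQ]].
    rewrite Q0 cards0.
    case: gb => [b0 | [bk [cF' | [K1 [HK1 eF]]]]].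
    - have := IHH 0 (or_introl erefl); rewrite b0; nlia.
    - by rewrite cF' in cF.
    - case: (boolP (v \in K1)) => vK1.
        by have := FQ_upv HK1 eF vK1; rewrite -eQ Q0 inE.
      have HK : H = up U0 K1.
        apply/setP => q; rewrite eHH inE; apply/idP/idP.
          case/orP => [|qG]; first by rewrite eA (FA_up eF).
          move: qG; rewrite eGs => /setIdP [qU /andP [_ qF]]; apply/setIdP; split => //.
          by move: qF; rewrite eF => /setIdP [_]; rewrite cont_ext_nv.
        by move=> qK; rewrite eA (FA_up eF) qK.
      have := IHH _ (or_intror (conj bk (or_intror (ex_intro _ K1 (conj (kcl0 HK1 vK1) HK))))).
      rewrite bk; nlia.
  have ex : exists p, p \in Q by exists p.
  have cQ1 : #|Q| <= k.-1.
    set Uq := [set p in U | (v \in p.1) && (#|p.1| == k)].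
    have CU : cpair C \in Uq by apply/setIdP; rewrite cpair_sub //= vC cCk eqxx.
    have : #|Q| <= #|Uq :\ cpair C|.
      apply: subset_leq_card; apply/subsetP => q; rewrite eQ => /setIdP [qF h]; rewrite in_setD1.
      apply/andP; split; first by apply/negP => /eqP e; rewrite -e qF in cF.
      by apply/setIdP; rewrite (subsetP FU q qF).
    have UQ : #|Uq| <= k := Uq_card.
    have := cardsD1 (cpair C) Uq; rewrite CU /=; clearbody Uq; nlia.
  have := IHH _ (KH ex).
  case: gb => [b0 | [bk [cF' | [K1 [HK1 eF]]]]].
  - rewrite b0; nlia.
  - by rewrite cF' in cF.
  - case: (boolP (v \in K1)) => vK1; last by have := FQ_upnv HK1 eF vK1; rewrite -eQ => Q0; rewrite Q0 inE in pQ.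
    have A0 : #|A| = 0.
      apply/eqP; rewrite cards_eq0; apply/eqP/setP => q; rewrite eA (FA_up eF) [in RHS]inE.
      apply/negP => /setIdP [qU /andP [/subsetP s _]].
      by have := U0v qU; rewrite (s v vK1).
    have Q1 : #|Q| <= 1 by rewrite -(cards1 (cpair K1)) eQ; apply: subset_leq_card; apply: FQ_up HK1 eF.
    have G1 : 0 < #|H| by apply/card_gt0P; exists (cpair K); rewrite eHH inE (KG ex) orbT.
    rewrite bk A0; nlia.
have HC0 := kcl0 HC vC.
have eG : \sum_(q in Gs) wC C (ext q) =
          \sum_(q in Gs) wC C q + \sum_(q in Gs) (contains_clique q C : nat).
  rewrite -big_split; apply: eq_bigr => q; rewrite eGs => /setIdP [qU _].
  by rewrite /wC cont_ext_nv // card_ext //; case: contains_clique => //=; rewrite addn1.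
rewrite eG.
have IHA : forall b', goodb S0 E0 C A b' -> #|A| + b' <= \sum_(p in A) wC C p.
  by move=> b' g; apply: IH.
have IHG : forall b', goodb S0 E0 C Gs b' -> #|Gs| + b' <= \sum_(p in Gs) wC C p.
  by move=> b' g; apply: IH.
have HGk : (exists p, p \in Q) ->
    #|Gs| + k <= \sum_(q in Gs) wC C q + \sum_(q in Gs) (contains_clique q C : nat).
  move=> ex; have := IHG _ (or_intror (conj erefl (or_intror (ex_intro _ K (conj kclK (GK ex)))))).
  have : 1 <= \sum_(q in Gs) (contains_clique q C : nat).
    by rewrite (bigD1 (S0, E0)) ?TG //= kcl_top.
  nlia.
have HGQ : #|Q| + #|Gs| <= \sum_(q in Gs) wC C q + \sum_(q in Gs) (contains_clique q C : nat).
  case: (set_0Vmem Q) => [Q0 | [p pQ]].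
    rewrite Q0 cards0 add0n; have := IHG 0 (or_introl erefl); nlia.
  have := HGk (ex_intro _ p pQ); nlia.
case: gb => [b0 | [bk [cF | [K1 [HK1 eF]]]]].
- have := IHA 0 (or_introl erefl); rewrite b0; nlia.
- have cA : cpair C \in A by rewrite eA; apply/setIdP; rewrite cF.
  have := IHA _ (or_intror (conj bk (or_introl cA))); nlia.
- case: (boolP (v \in K1)) => vK1.
    have pQ := FQ_upv HK1 eF vK1; rewrite -eQ in pQ.
    have Q1 : #|Q| <= 1 by rewrite -(cards1 (cpair K1)) eQ; apply: subset_leq_card; apply: FQ_up HK1 eF.
    have := HGk (ex_intro (fun p => p \in Q) _ pQ); have := IHA 0 (or_introl erefl); rewrite bk; nlia.
  have := IHA _ (or_intror (conj bk (or_intror (ex_intro _ K1 (conj (kcl0 HK1 vK1) (etrans eA (FA_up eF))))))).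
  nlia.
Qed.

End Step.
End Basic.

Lemma INV_all V k (VT : {set V}) ET : 0 < k -> is_ktree k VT ET -> INV k VT ET.
Proof.
move=> k0; elim => [S cS | S E K v H IH KS cK clK vS]; first exact: INV_base.
exact: INV_step.
Qed.

Unset Implicit Arguments.

Theorem lemma5p1 (V : finType) (k : nat) (VT : {set V}) (ET : {set {set V}})
    (C : {set V}) :
  1 <= k ->
  is_ktree k VT ET ->
  C \subset VT -> #|C| = k -> is_clique ET C ->
  Nbar k VT ET C < Rsum k VT ET C.
Proof.
move=> k0 H CV cC cl.
have HC : kcl k VT ET C by split.
have CU := cpair_sub HC.
have uU : upc (subktrees k VT ET) (subktrees k VT ET) by split.
have := INV_all k0 H HC uU (or_intror (conj erefl (or_introl CU))).
have -> : Rsum k VT ET C = \sum_(p in subktrees k VT ET) wC C p by rewrite /Rsum big_mkcondr.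
rewrite /Nbar.
have : #|[set p in subktrees k VT ET | ~~ contains_clique p C]| <=
       #|subktrees k VT ET :\ cpair C|.
  apply: subset_leq_card; apply/subsetP => p /setIdP [pU nc]; rewrite in_setD1 pU andbT.
  by apply/negP => /eqP e; move: nc; rewrite e /contains_clique /= !subxx.
have := cardsD1 (cpair C) (subktrees k VT ET); rewrite CU /=.
nlia.
Qed.
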